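(* For any $a,b\in M^*$, the intersection $S_a\cap S_b^{\varphi}$ contains at most one point, where $S_b^{\varphi}=\{F(c^qb^q+ci): c\in M^*\}$.
   Context: Let $q$ be a prime power, $n>1$ an integer, $F=\mathbb F_q\subset M=\mathbb F_{q^n}\subset L=\mathbb F_{q^{2n}}$. Regard $L$ as a $2n$-dimensional $F$-vector space; $\mathrm{PG}(2n-1,q)$ has as points the subspaces $Fz$, $z\in L^*$. Fix $i\in L\setminus M$, so every $z\in L$ is uniquely $z=a+ib$ with $a,b\in M$. For $a\in M$ let $S_a=\{F c(a+i): c\in M^*\}$. Let $\hat\varphi:L\to L$ be the $F$-linear bijection $\hat\varphi(a+ib)=a^q+ib$ ($a,b\in M$) and $\varphi$ the induced projectivity of $\mathrm{PG}(2n-1,q)$; $S_b^\varphi$ denotes the image of $S_b$ under $\varphi$. *)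

(* Defs.v *)
From HB Require Import structures.
From mathcomp Require Import all_boot all_order all_algebra all_field.
Unset Strict Implicit. Unset Printing Implicit Defensive.
Import GRing.Theory.
Local Open Scope ring_scope.

Section Defs.
Variable L : finFieldType. Variables q n : nat.

(* F = F_q inside L : the elements fixed by x |-> x^q *)
Definition Fset : {set L} := [set x : L | x ^+ q == x].
(* M = F_{q^n} inside L : the elements fixed by x |-> x^(q^n) *)
Definition Mset : {set L} := [set x : L | x ^+ (q ^ n) == x].
Definition Mstar : {set L} := Mset :\ 0.

(* the projective point F z (an F-subspace of L), z in L^* *)
Definition pt (z : L) : {set L} := [set lam * z | lam in Fset].

Definition Sset (i a : L) : {set {set L}} := [set pt (c * (a + i)) | c in Mstar].

(* S_b^phi = image of S_b under phi, where phihat(x + i y) = x^q + i y (x,y in M):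
   phihat(c(b+i)) = phihat(cb + i c) = (cb)^q + c i = c^q b^q + c i. *)
Definition Sphi (i b : L) : {set {set L}} :=
  [set pt (c ^+ q * b ^+ q + c * i) | c in Mstar].
End Defs.

(* Main.v *)
Require Import Defs.
From HB Require Import structures.
From mathcomp Require Import all_boot all_order all_algebra all_field.
From mathcomp Require Import ring.
Import GRing.Theory.
Local Open Scope ring_scope.

Section Aux.
Variable L : finFieldType. Variables q n : nat.

Lemma inF (x : L) : (x \in Fset L q) = (x ^+ q == x).
Proof. by rewrite inE. Qed.

Lemma inM (x : L) : (x \in Mset L q n) = (x ^+ (q ^ n) == x).
Proof. by rewrite inE. Qed.

Lemma F_mem_pt (z : L) lam : lam ^+ q = lam -> lam * z \in pt L q z.
Proof. by move=> h; apply/imsetP; exists lam => //; rewrite inF h. Qed.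

Lemma pt_self (z : L) : z \in pt L q z.
Proof. by rewrite -[X in X \in _]mul1r; apply: F_mem_pt; rewrite expr1n. Qed.

Lemma pt_scale (z : L) mu : mu != 0 -> mu ^+ q = mu -> pt L q (mu * z) = pt L q z.
Proof.
move=> mu0 hmu; apply/setP => x; apply/imsetP/imsetP => [[lam]|[lam]].
- rewrite inF => /eqP hl ->; exists (lam * mu); first by rewrite inF exprMn hl hmu.
  by rewrite mulrA.
- rewrite inF => /eqP hl ->; exists (lam / mu); first by rewrite inF exprMn exprVn hl hmu.
  by rewrite mulrA divfK.
Qed.

Lemma pt_eq (z w : L) : pt L q z = pt L q w -> exists2 lam, lam ^+ q = lam & w = lam * z.
Proof.
move=> h; have := pt_self w; rewrite -h => /imsetP [lam]; rewrite inF => /eqP ? ->.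
by exists lam.
Qed.
End Aux.
Arguments pt_eq {L q z w}.
Arguments pt_scale {L q z mu}.

Theorem mainTheorem9 (L : finFieldType) (q n : nat)
  (hq : exists p k, prime p /\ q = (p ^ k.+1)%N)
  (hn : (1 < n)%N)
  (hL : #|L| = (q ^ (2 * n))%N)
  (i : L) (hi : i \notin Mset L q n)
  (a b : L) (ha : a \in Mstar L q n) (hb : b \in Mstar L q n) :
  (#|Sset L q n i a :&: Sphi L q n i b| <= 1)%N.
Proof.
have [p [k [pp qE]]] := hq.
have pL : p \in [pchar L].
  by apply: (card_finPcharP (n := (k.+1 * (2 * n))%N)) => //; rewrite hL qE -expnM.
have natQ : [pchar L].-nat (q ^ n)%N.
  by rewrite qE -expnM pnatX pnatE // pL.
set m := (q ^ n)%N in natQ.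
have MB x y : x \in Mset L q n -> y \in Mset L q n -> x - y \in Mset L q n.
  rewrite !inM -/m => /eqP hx /eqP hy.
  by rewrite exprDn_pchar // exprNn_pchar // hx hy.
have MM x y : x \in Mset L q n -> y \in Mset L q n -> x * y \in Mset L q n.
  by rewrite !inM -/m exprMn => /eqP -> /eqP ->.
have MV x : x \in Mset L q n -> x^-1 \in Mset L q n.
  by rewrite !inM -/m exprVn => /eqP ->.
have FM x : x ^+ q = x -> x \in Mset L q n.
  move=> hx; rewrite inM; apply/eqP; elim: (n) => [|j IH]; first by rewrite expr1.
  by rewrite expnSr exprM IH.
move: ha hb; rewrite !in_setD1 => /andP [a0 aM] /andP [b0 bM].
have key P : P \in Sset L q n i a :&: Sphi L q n i b ->
    exists2 d, d != 0 /\ d * a = d ^+ q * b ^+ q & P = pt L q (d * (a + i)).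
  rewrite inE => /andP [/imsetP [c cS ->] /imsetP [d dS]].
  move: cS dS; rewrite !in_setD1 => /andP [c0 cM] /andP [d0 dM] Heq.
  have [lam hl E] := pt_eq Heq.
  have lM := FM _ hl.
  have ed : lam * c = d.
    apply/eqP; apply: contraNT hi => ne.
    have -> : i = (d ^+ q * b ^+ q - lam * c * a) / (lam * c - d).
      have ne' : lam * c - d != 0 by rewrite subr_eq0.
      apply: (mulIf ne'); rewrite divfK //.
      rewrite -[d ^+ q * b ^+ q](addrK (d * i)) E; ring.
    have MX x j : x \in Mset L q n -> x ^+ j \in Mset L q n.
      by move=> hx; elim: j => [|j IH]; [rewrite expr0 inM expr1n | rewrite exprS MM].
    have lcM : lam * c \in Mset L q n by apply: (MM).
    apply: (MM).
      apply: (MB); first by apply: (MM); apply: (MX).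
      by apply: (MM).
    by apply: (MV); apply: (MB).
  exists d; last first.
    rewrite Heq; congr (pt L q _).
    by rewrite -[d ^+ q * b ^+ q](addrK (d * i)) E mulrA ed; ring.
  split=> //; apply: (addIr (d * i)); rewrite E mulrA ed; ring.
have bq0 : b ^+ q != 0 by rewrite expf_neq0.
apply/card_le1_eqP => P1 P2 /key [d1 [d10 h1] ->] /key [d2 [d20 h2] ->].
have e1 : d1 ^+ q = d1 * a / b ^+ q by rewrite h1 mulfK.
have e2 : d2 ^+ q = d2 * a / b ^+ q by rewrite h2 mulfK.
have mu0 : d2 / d1 != 0 by rewrite mulf_neq0 ?invr_eq0.
have muq : (d2 / d1) ^+ q = d2 / d1.
  by rewrite exprMn exprVn e1 e2 invf_div mulrA divfK // invfM mulrACA divff // mulr1.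
rewrite -(pt_scale (z := d1 * (a + i)) mu0 muq); congr (pt L q _).
by rewrite mulrA divfK.
Qed.
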